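(* The graph $T_8$ is a minimal non-word-representable graph: $T_8$ is not word-representable, but every graph obtained from $T_8$ by deleting one vertex is word-representable.
   Context: A graph $G=(V,E)$ is word-representable if there exists a word $w$ over the alphabet $V$ such that for all distinct $x,y\in V$, the letters $x$ and $y$ alternate in $w$ if and only if $xy\in E$ (alternation meaning that deleting all letters other than $x$ and $y$ leaves $xyxy\cdots$ or $yxyx\cdots$). The graph $T_8$ has vertex set $\{1,\dots,9\}$; the vertices $1,2,3,4,5$ form a clique, the vertices $6,7,8,9$ form an independent set, and the remaining edges are: $6$ is adjacent to $1,3$; $7$ is adjacent to $2,4$; $8$ is adjacent to $1,2,5$; $9$ is adjacent to $1,2,3,4$. *)

(* Defs.v *)
From mathcomp Require Import all_boot.
Set Implicit Arguments. Unset Strict Implicit. Unset Printing Implicit Defensive.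

Definition alternate (T : eqType) (w : seq T) (x y : T) : bool :=
  sorted (fun a b => a != b) [seq z <- w | (z == x) || (z == y)].

Definition word_representable (T : finType) (e : rel T) : Prop :=
  exists w : seq T, (forall x : T, x \in w) /\
    (forall x y : T, x != y -> (alternate w x y <-> e x y)).

Definition del_vertex_rel (T : finType) (e : rel T) (v : T)
  : rel {x : T | x != v} := fun x y => e (val x) (val y).
Arguments del_vertex_rel {T} e v.

Definition T8_edge_list : seq (nat * nat) :=
  [:: (1,2); (1,3); (1,4); (1,5); (2,3); (2,4); (2,5); (3,4); (3,5); (4,5);
      (6,1); (6,3); (7,2); (7,4); (8,1); (8,2); (8,5);
      (9,1); (9,2); (9,3); (9,4)].

Definition T8_adj (a b : nat) : bool :=
  ((a, b) \in T8_edge_list) || ((b, a) \in T8_edge_list).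

(* Vertex type: i : 'I_9 stands for vertex label i+1. *)
Definition T8 : rel 'I_9 := fun i j => T8_adj i.+1 j.+1.

(* Main.v *)
Require Import Defs.
From mathcomp Require Import all_boot zify.
Set Implicit Arguments. Unset Strict Implicit. Unset Printing Implicit Defensive.

Section Words.
Variable T : eqType.

Definition lead (u : seq T) (x y : T) : bool :=
  (count_mem y u <= count_mem x u) && (count_mem x u <= (count_mem y u).+1).
Definition Lw (u : seq T) x y := forall m, lead (take m u) x y.
Definition Dw (w : seq T) x y := forall n, lead (take n w) x y.

Lemma lead_cons (x y : T) v : x != y -> lead (x :: v) x y = lead v y x.
Proof.
move=> nxy; rewrite /lead /= eqxx (negbTE nxy) add0n add1n ltnS.
by rewrite andbC.
Qed.

Lemma lead_nil x y : lead [::] x y.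
Proof. by []. Qed.

Lemma Lw_cons (x y : T) v : x != y -> Lw (x :: v) x y <-> Lw v y x.
Proof.
move=> nxy; split=> H m.
  by have := H m.+1; rewrite /= lead_cons.
by case: m => [|m] //=; rewrite lead_cons.
Qed.

Lemma Lw_consy (x y : T) v : x != y -> ~ Lw (y :: v) x y.
Proof.
move=> nxy H; have := H 1; rewrite /= take0 /lead /= eqxx eq_sym (negbTE nxy).
by [].
Qed.

Definition allxy (u : seq T) x y := all (fun z => (z == x) || (z == y)) u.

Lemma allxy_sym u x y : allxy u x y -> allxy u y x.
Proof. by move=> h; apply/allP=> z /(allP h); rewrite orbC. Qed.

Lemma L_sorted (u : seq T) x y : x != y -> allxy u x y -> Lw u x y ->
  sorted (fun a b => a != b) u.
Proof.
elim: u x y => [|z u IH] x y nxy //= /andP[hz hu] HL.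
case/orP: hz => /eqP ?; subst z; last by case: (Lw_consy nxy HL).
move/(Lw_cons _ nxy): HL => HL'.
have nyx : y != x by rewrite eq_sym.
have := IH y x nyx (allxy_sym hu) HL'.
case: u hu HL' {IH} => [|a u] //= /andP[ha hu] HL' ->.
case/orP: ha => /eqP ?; subst a; first by case: (Lw_consy nyx HL').
by rewrite andbT.
Qed.

Lemma sorted_L (u : seq T) x y : x != y -> allxy (x :: u) x y ->
  sorted (fun a b => a != b) (x :: u) -> Lw (x :: u) x y.
Proof.
elim: u x y => [|z u IH] x y nxy hall hs.
  by apply/(Lw_cons _ nxy) => m; rewrite /=.
apply/(Lw_cons _ nxy).
move: hall hs => /= /andP[_ /andP[hz hu]] /andP[nxz hp].
case/orP: hz => /eqP ?; subst z; first by rewrite eqxx in nxz.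
have nyx : y != x by rewrite eq_sym.
apply: IH => //=.
by rewrite eqxx /=; apply: allxy_sym.
Qed.

Lemma filter_take_ex (P : pred T) w n : exists k, filter P (take n w) = take k (filter P w).
Proof.
elim: w n => [|z w IH] [|n] /=; try by exists 0; rewrite ?take0.
have [k hk] := IH n.
by case: (P z); [exists k.+1; rewrite /= hk | exists k].
Qed.

Lemma take_filter_ex (P : pred T) w k : exists n, filter P (take n w) = take k (filter P w).
Proof.
elim: w k => [|z w IH] k /=; first by exists 0.
case hz: (P z) => /=.
  case: k => [|k]; first by exists 0.
  by have [n hn] := IH k; exists n.+1; rewrite /= hz hn.
have [n hn] := IH k; exists n.+1; by rewrite /= hz hn.
Qed.

Lemma count_mem_filter (P : pred T) s x : P x -> count_mem x (filter P s) = count_mem x s.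
Proof.
move=> Px; rewrite count_filter; apply: eq_count => z /=.
by case: eqP => // ->; rewrite Px.
Qed.

Lemma lead_filter (P : pred T) s x y : P x -> P y -> lead (filter P s) x y = lead s x y.
Proof. by move=> Px Py; rewrite /lead !count_mem_filter. Qed.

Lemma D_L (P : pred T) w x y : P x -> P y -> (Dw w x y <-> Lw (filter P w) x y).
Proof.
move=> Px Py; split=> H m.
  have [n hn] := take_filter_ex P w m.
  by rewrite -hn lead_filter.
have [k hk] := filter_take_ex P w m.
by rewrite -(lead_filter _ Px Py) hk.
Qed.

Lemma alt_D w (x y : T) : x != y -> x \in w -> alternate w x y -> Dw w x y \/ Dw w y x.
Proof.
move=> nxy xw; rewrite /alternate.
set P := (fun z => (z == x) || (z == y)).
have Px : P x by rewrite /P eqxx.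
have Py : P y by rewrite /P eqxx orbT.
have hall : allxy (filter P w) x y by apply: filter_all.
have : x \in filter P w by rewrite mem_filter Px.
case E : (filter P w) hall => [|a u] //= /andP[ha hu] _ hs.
case/orP: ha => /eqP ?; subst a.
  left; apply/(D_L _ Px Py); rewrite E; apply: sorted_L => //=.
  by rewrite eqxx.
right; apply/(D_L _ Py Px); rewrite E; apply: sorted_L => //=.
  by rewrite eq_sym.
by rewrite eqxx /=; apply: allxy_sym.
Qed.

Lemma D_alt w (x y : T) : x != y -> Dw w x y -> alternate w x y.
Proof.
move=> nxy H; rewrite /alternate.
set P := (fun z => (z == x) || (z == y)).
have Px : P x by rewrite /P eqxx.
have Py : P y by rewrite /P eqxx orbT.
apply: (L_sorted nxy); first by apply: filter_all.
exact: (D_L w Px Py).1 H.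
Qed.

Lemma D_index w (x y : T) : x \in w -> y \in w -> index x w < index y w -> ~ Dw w y x.
Proof.
move=> xw yw lt H; have := H (index x w).+1.
have hx : x \in take (index x w).+1 w by rewrite in_take.
have hy : y \notin take (index x w).+1 w by rewrite in_take // ltnS -ltnNge.
rewrite /lead; move/count_memPn: hy => ->.
by case/andP; rewrite leqn0 => /eqP/count_memPn; rewrite hx.
Qed.

Lemma shortcut w (a b c d : T) : a \in w -> b \in w -> c \in w -> d \in w ->
  index a w < index b w -> index b w < index c w -> index c w < index d w ->
  alternate w a b -> alternate w b c -> alternate w c d -> alternate w a d ->
  alternate w a c /\ alternate w b d.
Proof.
move=> aw bw cw dw lab lbc lcd hab hbc hcd had.
have neq u v : index u w < index v w -> u != v.
  by move=> h; apply/eqP => E; rewrite E ltnn in h.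
have lac : index a w < index c w by apply: ltn_trans lbc.
have lbd : index b w < index d w by apply: ltn_trans lcd.
have lad : index a w < index d w by apply: ltn_trans lcd.
have DD u v : u \in w -> v \in w -> index u w < index v w -> alternate w u v -> Dw w u v.
  move=> uw vw l huv; case: (alt_D (neq _ _ l) uw huv) => // H.
  by case: (D_index uw vw l H).
have Dab := DD _ _ aw bw lab hab.
have Dbc := DD _ _ bw cw lbc hbc.
have Dcd := DD _ _ cw dw lcd hcd.
have Dad := DD _ _ aw dw lad had.
split; apply: D_alt; try exact: neq; move=> n;
  move: (Dab n) (Dbc n) (Dcd n) (Dad n); rewrite /lead;
  move=> /andP[? ?] /andP[? ?] /andP[? ?] /andP[? ?]; apply/andP; split; lia.
Qed.
End Words.

Definition tbl : seq (seq (nat*nat*nat)) := [:: [:: (1,2,5); (1,6,3); (2,1,7); (2,4,7); (3,1,7); (3,2,5); (3,4,7); (3,6,1); (4,1,8); (4,2,5); (4,2,8); (4,3,8); (5,2,1); (5,2,3); (5,2,4); (5,2,8); (7,1,2); (7,1,3); (7,1,8); (7,4,2); (7,4,3); (8,1,4); (8,1,7); (8,2,4); (8,2,5); (8,3,4)];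
 [:: (0,3,6); (0,5,2); (2,0,7); (2,3,6); (2,4,7); (2,5,0); (3,0,7); (3,4,7); (4,0,8); (4,2,8); (4,3,6); (4,3,8); (6,3,0); (6,3,2); (6,3,4); (6,3,8); (7,0,2); (7,0,3); (7,0,8); (7,4,2); (7,4,3); (8,0,4); (8,0,7); (8,2,4); (8,3,4); (8,3,6)];
 [:: (0,7,1); (0,7,4); (1,0,5); (1,6,3); (1,7,0); (1,7,4); (3,0,5); (3,6,1); (4,0,5); (4,0,8); (4,1,8); (4,3,8); (4,7,0); (4,7,1); (5,0,1); (5,0,3); (5,0,4); (5,0,8); (8,0,4); (8,0,5); (8,1,4); (8,3,4)];
 [:: (0,1,6); (0,5,2); (0,7,1); (0,7,4); (1,7,0); (1,7,4); (2,1,6); (2,5,0); (4,0,8); (4,1,6); (4,1,8); (4,2,8); (4,7,0); (4,7,1); (6,1,0); (6,1,2); (6,1,4); (6,1,8); (8,0,4); (8,1,4); (8,1,6); (8,2,4)];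
 [:: (0,5,2); (0,8,1); (0,8,2); (0,8,3); (1,6,3); (1,8,0); (1,8,2); (1,8,3); (2,0,7); (2,1,7); (2,5,0); (2,8,0); (2,8,1); (2,8,3); (3,0,7); (3,1,7); (3,6,1); (3,8,0); (3,8,1); (3,8,2); (7,0,2); (7,0,3); (7,1,2); (7,1,3)];
 [:: (0,1,2); (0,3,2); (0,4,2); (0,8,2); (2,1,0); (2,3,0); (2,4,0); (2,8,0)];
 [:: (1,0,3); (1,2,3); (1,4,3); (1,8,3); (3,0,1); (3,2,1); (3,4,1); (3,8,1)];
 [:: (0,2,1); (0,2,4); (0,3,1); (0,3,4); (0,8,1); (1,2,0); (1,2,4); (1,3,0); (1,3,4); (1,8,0); (4,2,0); (4,2,1); (4,3,0); (4,3,1)];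
 [:: (0,4,1); (0,4,2); (0,4,3); (0,5,2); (0,7,1); (1,4,0); (1,4,2); (1,4,3); (1,6,3); (1,7,0); (2,4,0); (2,4,1); (2,4,3); (2,5,0); (3,4,0); (3,4,1); (3,4,2); (3,6,1)]].
Fixpoint subs (q p : seq nat) : bool :=
  match q, p with
  | [::], _ => true
  | _ :: _, [::] => false
  | x :: q', y :: p' => if eqn x y then subs q' p' else subs q p'
  end.
Fixpoint remn (x : nat) (r : seq nat) := match r with [::] => [::] | y :: r' => if eqn y x then r' else y :: remn x r' end.
Definition firesl (t : seq (seq (nat*nat*nat))) (p : seq nat) (x : nat) : bool :=
  has (fun q => match q with (a,b,c) => subs [:: c; b; a] p end) (nth [::] t x).
Fixpoint chk t (n : nat) (p r : seq nat) : bool :=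
  match n with 0 => false | n'.+1 => all (fun x => firesl t p x || chk t n' (x :: p) (remn x r)) r end.

Lemma chk9 : chk tbl 9 [::] (iota 0 9).
Proof. vm_compute. reflexivity. Qed.

Lemma subsE q p : subs q p = subseq q p.
Proof.
elim: p q => [|y p IH] [|x q] //=.
by rewrite eqnE; case: (x == y); rewrite IH.
Qed.

Lemma remnE x r : remn x r = rem x r.
Proof. by elim: r => [|y r IH] //=; rewrite eqnE IH. Qed.

Lemma chk_sound n p r s : chk tbl n p r -> size r = n -> perm_eq s r -> 0 < n ->
  exists a b c d, (a, b, c) \in nth [::] tbl d /\ subseq [:: a; b; c; d] (rev p ++ s).
Proof.
elim: n p r s => [|n IH] p r s //= hc hsz hperm _.
case: s hperm => [|x s] hperm.
  by move: (perm_size hperm); rewrite hsz.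
have xr : x \in r by rewrite -(perm_mem hperm) mem_head.
move/allP: hc => /(_ x xr) /orP[].
  case/hasP => [[[a b] c]] hin; rewrite subsE => hsub.
  exists a, b, c, x; split => //.
  have -> : [:: a; b; c; x] = [:: a; b; c] ++ [:: x] by [].
  apply: cat_subseq; last by rewrite sub1seq mem_head.
  by have -> : [:: a; b; c] = rev [:: c; b; a] by []; rewrite subseq_rev.
rewrite remnE => hc.
have hsz' : size (rem x r) = n by rewrite size_rem // hsz.
have hp' : perm_eq s (rem x r).
  by rewrite -(perm_cons x); apply: (perm_trans hperm); apply: perm_to_rem.
case: n IH hc hsz hsz' => [|n] IH hc hsz hsz' //.
have [a [b [c [d [h1 h2]]]]] := IH _ _ _ hc hsz' hp' isT.
by exists a, b, c, d; rewrite rev_cons cat_rcons in h2.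
Qed.

Definition bad (a b c d : nat) : bool :=
  [&& a < 9, b < 9, c < 9, d < 9, a != b, b != c, c != d,
      T8_adj a.+1 b.+1, T8_adj b.+1 c.+1, T8_adj c.+1 d.+1, T8_adj a.+1 d.+1 &
      ~~ (T8_adj a.+1 c.+1 && T8_adj b.+1 d.+1)].

Lemma tbl_ok : all (fun d => all (fun q => match q with (a,b,c) => bad a b c d end) (nth [::] tbl d)) (iota 0 9).
Proof. vm_compute. reflexivity. Qed.

Lemma tbl_bad a b c d : (a, b, c) \in nth [::] tbl d -> bad a b c d.
Proof.
case: (ltnP d 9) => hd.
  move=> hin; have := allP tbl_ok d; rewrite mem_iota add0n hd => /(_ isT).
  by move/allP => /(_ _ hin).
by rewrite nth_default.
Qed.

Lemma not_rep : ~ word_representable T8.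
Proof.
move=> [w [hw halt]].
pose key (i : nat) := index (inord i : 'I_9) w.
pose le := fun i j => key i <= key j.
pose s := sort le (iota 0 9).
have hs : perm_eq s (iota 0 9) by rewrite /s perm_sort perm_refl.
have [a [b [c [d [hq hsub]]]]] := chk_sound chk9 (size_iota 0 9) hs isT.
have := tbl_bad hq.
move=> /andP[ha /andP[hb /andP[hc /andP[hd /andP[nab /andP[nbc /andP[ncd
  /andP[eab /andP[ebc /andP[ecd /andP[ead nac]]]]]]]]]]].
have hsort : sorted le s by apply: sort_sorted => i j; exact: leq_total.
have := subseq_sorted (fun i j k => @leq_trans (key i) (key j) (key k)) hsub hsort.
rewrite /= /le => /andP[lab /andP[lbc /andP[lcd _]]].
have neqo i j : i < 9 -> j < 9 -> i != j -> (inord i : 'I_9) != inord j.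
  move=> hi hj nij; apply/eqP => /(congr1 val); rewrite /= !inordK //.
  by apply/eqP.
have strict i j : i < 9 -> j < 9 -> i != j -> key i <= key j -> key i < key j.
  move=> hi hj nij lij; rewrite ltn_neqAle lij andbT.
  apply/eqP => E.
  have := index_inj (inord 0) (hw (inord i)) (hw (inord j)) E.
  by move/eqP; rewrite (negbTE (neqo _ _ hi hj nij)).
have altE : forall i j, i < 9 -> j < 9 -> i != j ->
    alternate w (inord i : 'I_9) (inord j) = T8_adj i.+1 j.+1.
  move=> i j hi hj nij; apply/idP/idP => h.
    by have := (halt _ _ (neqo _ _ hi hj nij)).1 h; rewrite /T8 !inordK.
  by apply: (halt _ _ (neqo _ _ hi hj nij)).2; rewrite /T8 !inordK.
have lab' := strict _ _ ha hb nab lab.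
have lbc' := strict _ _ hb hc nbc lbc.
have lcd' := strict _ _ hc hd ncd lcd.
have nad : a != d.
  by apply/eqP => E; subst d; move: (ltn_trans lab' (ltn_trans lbc' lcd')); rewrite ltnn.
have nac' : a != c.
  by apply/eqP => E; subst c; move: (ltn_trans lab' lbc'); rewrite ltnn.
have nbd : b != d.
  by apply/eqP => E; subst d; move: (ltn_trans lbc' lcd'); rewrite ltnn.
have [h1 h2] := shortcut (hw _) (hw _) (hw _) (hw _)
  lab' lbc' lcd'
  (eq_ind_r _ eab (altE _ _ ha hb nab)) (eq_ind_r _ ebc (altE _ _ hb hc nbc))
  (eq_ind_r _ ecd (altE _ _ hc hd ncd)) (eq_ind_r _ ead (altE _ _ ha hd nad)).
rewrite altE // in h1; rewrite altE // in h2.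
by rewrite h1 h2 in nac.
Qed.

Definition Lwd (v : nat) : seq nat :=
  match v with
  | 0 => [:: 1; 3; 6; 2; 8; 7; 4; 1; 7; 3; 5; 2; 5; 4; 8; 6]
  | 1 => [:: 0; 2; 5; 3; 8; 7; 4; 0; 7; 2; 6; 3; 6; 4; 8; 5]
  | 2 => [:: 0; 1; 7; 3; 4; 8; 5; 0; 5; 6; 1; 3; 6; 8; 7; 4]
  | 3 => [:: 0; 1; 4; 7; 8; 5; 2; 0; 5; 6; 1; 6; 8; 4; 2; 7]
  | 4 => [:: 0; 1; 7; 3; 8; 5; 2; 0; 5; 6; 1; 3; 6; 8; 2; 7]
  | 5 => [:: 0; 1; 7; 3; 2; 4; 8; 0; 6; 1; 3; 6; 2; 8; 7; 4]
  | 6 => [:: 0; 1; 4; 7; 8; 3; 5; 2; 0; 5; 1; 8; 4; 3; 2; 7]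
  | 7 => [:: 0; 1; 3; 4; 8; 5; 2; 0; 5; 6; 1; 3; 6; 8; 4; 2]
  | 8 => [:: 0; 2; 5; 3; 7; 1; 4; 0; 7; 2; 6; 3; 1; 6; 4; 5]
  | _ => [::] end.
Definition chkw (v : nat) (l : seq nat) : bool :=
  [&& all (fun n => (n < 9) && (n != v)) l,
      all (fun i => (i != v) ==> (i \in l)) (iota 0 9) &
      all (fun i => all (fun j => (i != v) ==> ((j != v) ==> ((i != j) ==>
         (alternate l i j == T8_adj i.+1 j.+1)))) (iota 0 9)) (iota 0 9)].

Lemma chkw_ok : all (fun v => chkw v (Lwd v)) (iota 0 9).
Proof. vm_compute. reflexivity. Qed.

Lemma alternate_map (T U : eqType) (f : T -> U) (finj : injective f) w x y :
  alternate (map f w) (f x) (f y) = alternate w x y.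
Proof.
rewrite /alternate filter_map sorted_map.
have -> : filter (preim f (fun z => (z == f x) || (z == f y))) w =
          filter (fun z => (z == x) || (z == y)) w.
  by apply: eq_filter => z /=; rewrite !(inj_eq finj).
case: (filter _ w) => //= a s; apply: eq_path => u u' /=.
by rewrite (inj_eq finj).
Qed.

Lemma rep_del (v : 'I_9) : word_representable (del_vertex_rel T8 v).
Proof.
have := allP chkw_ok (val v); rewrite mem_iota add0n ltn_ord => /(_ isT).
case/and3P => h1 h2 h3.
pose f := fun x : {x : 'I_9 | x != v} => nat_of_ord (val x).
have finj : injective f by move=> x y /val_inj /val_inj.
pose g := fun n : nat => (insub (inord n : 'I_9) : option {x : 'I_9 | x != v}).
exists (pmap g (Lwd v)).
have hmap : map f (pmap g (Lwd v)) = Lwd v.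
  elim: (Lwd v) h1 => [|n l IH] //= /andP[/andP[hn hnv] hl].
  have P : (inord n : 'I_9) != v.
    by apply: contra hnv => /eqP <-; rewrite inordK.
  by rewrite /g (insubT (fun x : 'I_9 => x != v) P) /= IH // /f /= inordK.
split.
  move=> x; rewrite -(mem_map finj) hmap.
  have := allP h2 (f x); rewrite mem_iota add0n ltn_ord => /(_ isT).
  by move/implyP; apply; apply: (valP x).
move=> x y nxy; rewrite -(alternate_map finj) hmap.
have := allP h3 (f x); rewrite mem_iota add0n ltn_ord => /(_ isT).
move/allP => /(_ (f y)); rewrite mem_iota add0n ltn_ord => /(_ isT).
rewrite (valP x) (valP y) (inj_eq finj) nxy /= => /eqP ->.
by [].
Qed.

Theorem theorem16 :
  ~ word_representable T8 /\
  (forall v : 'I_9, word_representable (del_vertex_rel T8 v)).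
Proof. split; [exact: not_rep | exact: rep_del]. Qed.
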